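(* Let $e\in\mathbb{S}$, $k=\mathbb{Z}[\mu_e]$, $M$ a $k$-module, $E=\mathrm{End}_k(M)$, and let $A\subseteq E$ be a $k$-subalgebra that is $p$-good and satisfies $(1-\zeta_p)A=A\cap(1-\zeta_p)E$ for every prime $p$ dividing $e$ (where $\zeta_p$ is a primitive $p$-th root of unity). If $\rho,\sigma\in A$ are $\mu_e$-diagonalizable and the subgroup $\langle\rho,\sigma\rangle$ of $\mathrm{Aut}_k(M)$ is torsion (every element has finite order), then $\rho$ and $\sigma$ commute.
   Context: Steinitz numbers $\mathbb{S}$: formal products $\prod_p p^{n_p}$ over primes with $n_p\in\mathbb{Z}_{\ge0}\cup\{\infty\}$; a prime $p$ divides $e$ if $n_p\ge1$. $\mu_e\subseteq\mathbb{C}^*$: roots of unity of order dividing $e$ (i.e. $\mathrm{ord}_p$ of the order is $\le n_p$ for all $p$); $\mathbb{Z}[\mu_e]$ the subring of $\mathbb{C}$ it generates. For $f\in\mathrm{End}_k(M)$, $M(f,\zeta)=\{x: f(x)=\zeta x\}$, and $f$ is $\mu_e$-diagonalizable if $\bigoplus_{\zeta\in\mu_e}M(f,\zeta)\to M$ is an isomorphism. A $k$-subalgebra $A\subseteq\mathrm{End}_k(M)$ is $p$-good if $p(1-ps)$ is injective on $M$ for every $s\in A$. *)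

(* Defs.v *)
From HB Require Import structures.
From mathcomp Require Import all_boot all_order all_algebra all_field.
Set Implicit Arguments. Unset Strict Implicit. Unset Printing Implicit Defensive.
Import Order.TTheory GRing.Theory Num.Theory.
Local Open Scope ring_scope.

(* Steinitz numbers: e p = Some n_p (finite exponent) or None (exponent oo).
   Only the values at primes p are meaningful. *)
Definition steinitz := nat -> option nat.

Definition le_exp (m : nat) (np : option nat) : Prop :=
  match np with None => True | Some n => (m <= n)%N end.

Definition st_dvd (p : nat) (e : steinitz) : Prop := le_exp 1 (e p).

Definition in_mu (e : steinitz) (z : algC) : Prop :=
  exists n : nat, (0 < n)%N /\ n.-primitive_root z /\
    forall p, prime p -> le_exp (logn p n) (e p).

(* Z[mu_e] : the subring of C (here: of algC, which contains all roots of
   unity) generated by mu_e, i.e. the smallest subring containing mu_e. *)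
Definition in_Zmu (e : steinitz) (x : algC) : Prop :=
  forall S : algC -> Prop,
    S 1 ->
    (forall a b, S a -> S b -> S (a - b)) ->
    (forall a b, S a -> S b -> S (a * b)) ->
    (forall z, in_mu e z -> S z) ->
    S x.

Definition is_End (k : pzRingType) (M : lmodType k) (f : M -> M) : Prop :=
  forall (a : k) (x y : M), f (a *: x + y) = a *: f x + f y.

Definition is_subalg (k : pzRingType) (M : lmodType k) (A : (M -> M) -> Prop)
  : Prop :=
  (forall f, A f -> is_End f) /\
  [/\ A (fun x => x),
      A (fun _ => 0),
      (forall f g, A f -> A g -> A (fun x => f x + g x)),
      (forall (a : k) f, A f -> A (fun x => a *: f x)) &
      (forall f g, A f -> A g -> A (fun x => f (g x)))].

Definition p_good (k : pzRingType) (M : lmodType k) (p : nat)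
  (A : (M -> M) -> Prop) : Prop :=
  forall s, A s -> injective (fun x : M => (x - (s x) *+ p) *+ p).

Definition eigen (k : pzRingType) (M : lmodType k) (f : M -> M) (z : k) (x : M)
  : Prop := f x = z *: x.

(* f is mu_e-diagonalizable: the canonical map from the direct sum
   (+)_{zeta in mu_e} M(f, zeta) to M is bijective.  Eigenvalues are elements
   of k, and iota : k -> algC identifies k with Z[mu_e]. A finitely supported
   family in the direct sum is given by a duplicate-free list s of eigenvalues
   and the components v z. *)
Definition mu_diag (e : steinitz) (k : pzRingType) (iota : k -> algC)
  (M : lmodType k) (f : M -> M) : Prop :=
  (forall x : M, exists (s : seq k) (v : k -> M),
      [/\ uniq s, (forall z, z \in s -> in_mu e (iota z)),
          (forall z, z \in s -> eigen f z (v z)) &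
          x = \sum_(z <- s) v z]) /\
  (forall (s : seq k) (v : k -> M),
      uniq s -> (forall z, z \in s -> in_mu e (iota z)) ->
      (forall z, z \in s -> eigen f z (v z)) ->
      \sum_(z <- s) v z = 0 -> forall z, z \in s -> v z = 0).

Inductive gen2 (M : Type) (r s : M -> M) : (M -> M) -> Prop :=
  | gen2_id : gen2 r s (fun x => x)
  | gen2_r : gen2 r s r
  | gen2_s : gen2 r s s
  | gen2_comp f g : gen2 r s f -> gen2 r s g -> gen2 r s (fun x => f (g x))
  | gen2_inv f g : gen2 r s f -> (forall x, f (g x) = x) ->
                   (forall x, g (f x) = x) -> gen2 r s g.

Definition torsion2 (M : Type) (r s : M -> M) : Prop :=
  forall g, gen2 r s g -> exists n : nat, (0 < n)%N /\ iter n g = (fun x => x).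

(* Main.v *)
Require Import Defs.
From HB Require Import structures.
From mathcomp Require Import all_boot all_order all_algebra all_field.
From mathcomp Require Import boolp.
From mathcomp Require Import ring.
From mathcomp Require Import zify.
Import Order.TTheory GRing.Theory Num.Theory.
Local Open Scope ring_scope.
Set Implicit Arguments. Unset Strict Implicit. Unset Printing Implicit Defensive.

Section EndoRing.
Variable (k : comNzRingType) (M : lmodType k).

Record endo := Endo { ef :> M -> M ; efP : is_End ef }.

Lemma endoP (f g : endo) : (forall x, f x = g x) -> f = g.
Proof.
case: f g => f Hf [g Hg] /= H.
have e : f = g by apply: funext.
subst g; congr Endo; apply: Prop_irrelevance.
Qed.

Lemma lin_add (f : M -> M) : is_End f -> forall x y, f (x + y) = f x + f y.
Proof. by move=> H x y; have := H 1 x y; rewrite !scale1r. Qed.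
Lemma lin0 (f : M -> M) : is_End f -> f 0 = 0.
Proof. by move=> H; have := lin_add H 0 0; rewrite addr0 -{1}(addr0 (f 0)) => /addrI. Qed.
Lemma linZ (f : M -> M) : is_End f -> forall a x, f (a *: x) = a *: f x.
Proof. by move=> H a x; have := H a x 0; rewrite !addr0 (lin0 H) addr0. Qed.
Lemma linN (f : M -> M) : is_End f -> forall x, f (- x) = - f x.
Proof. by move=> H x; rewrite -scaleN1r linZ // scaleN1r. Qed.
Lemma linB (f : M -> M) : is_End f -> forall x y, f (x - y) = f x - f y.
Proof. by move=> H x y; rewrite lin_add // linN. Qed.
Lemma linMn (f : M -> M) : is_End f -> forall x n, f (x *+ n) = f x *+ n.
Proof. by move=> H x; elim=> [|n IH]; rewrite ?mulr0n ?lin0 // !mulrS lin_add // IH. Qed.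
Lemma lin_sum (f : M -> M) : is_End f -> forall (I : Type) (r : seq I) (P : pred I) (F : I -> M),
  f (\sum_(i <- r | P i) F i) = \sum_(i <- r | P i) f (F i).
Proof.
move=> H I r P F; elim: r => [|a r IH]; first by rewrite !big_nil lin0.
by rewrite !big_cons; case: (P a); rewrite ?lin_add // IH.
Qed.

Lemma End_add (f g : M -> M) : is_End f -> is_End g -> is_End (fun x => f x + g x).
Proof. by move=> Hf Hg a x y; rewrite Hf Hg scalerDr addrACA. Qed.
Lemma End_opp (f : M -> M) : is_End f -> is_End (fun x => - f x).
Proof. by move=> Hf a x y; rewrite Hf opprD scalerN. Qed.
Lemma End_zero : is_End (fun _ : M => 0).
Proof. by move=> a x y; rewrite scaler0 addr0. Qed.
Lemma End_id : is_End (fun x : M => x).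
Proof. by []. Qed.
Lemma End_comp (f g : M -> M) : is_End f -> is_End g -> is_End (fun x => f (g x)).
Proof. by move=> Hf Hg a x y; rewrite Hg Hf. Qed.
Lemma End_sc (a : k) : is_End (fun x : M => a *: x).
Proof. by move=> b x y; rewrite scalerDr !scalerA mulrC. Qed.

Definition eadd f g := Endo (End_add (efP f) (efP g)).
Definition eopp f := Endo (End_opp (efP f)).
Definition ezero := Endo End_zero.
Definition eone := Endo End_id.
Definition emul f g := Endo (End_comp (efP f) (efP g)).
Definition esc a := Endo (End_sc a).

HB.instance Definition _ := gen_eqMixin endo.
HB.instance Definition _ := gen_choiceMixin endo.

Lemma eaddA : associative eadd.
Proof. by move=> f g h; apply: endoP => x /=; rewrite addrA. Qed.
Lemma eaddC : commutative eadd.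
Proof. by move=> f g; apply: endoP => x /=; rewrite addrC. Qed.
Lemma eadd0 : left_id ezero eadd.
Proof. by move=> f; apply: endoP => x /=; rewrite add0r. Qed.
Lemma eaddN : left_inverse ezero eopp eadd.
Proof. by move=> f; apply: endoP => x /=; rewrite addNr. Qed.
HB.instance Definition _ := GRing.isZmodule.Build endo eaddA eaddC eadd0 eaddN.

Lemma emulA : associative emul.
Proof. by move=> f g h; apply: endoP. Qed.
Lemma emul1 : left_id eone emul.
Proof. by move=> f; apply: endoP. Qed.
Lemma emulr1 : right_id eone emul.
Proof. by move=> f; apply: endoP. Qed.
Lemma emulDl : left_distributive emul +%R.
Proof. by move=> f g h; apply: endoP. Qed.
Lemma emulDr : right_distributive emul +%R.
Proof. by move=> f g h; apply: endoP => x /=; rewrite (lin_add (efP f)). Qed.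
HB.instance Definition _ := GRing.Zmodule_isPzRing.Build endo emulA emul1 emulr1 emulDl emulDr.

Lemma eaddE (f g : endo) x : (f + g) x = f x + g x. Proof. by []. Qed.
Lemma eoppE (f : endo) x : (- f) x = - f x. Proof. by []. Qed.
Lemma esubE (f g : endo) x : (f - g) x = f x - g x. Proof. by []. Qed.
Lemma ezeroE x : (0 : endo) x = 0. Proof. by []. Qed.
Lemma eoneE x : (1 : endo) x = x. Proof. by []. Qed.
Lemma emulE (f g : endo) x : (f * g) x = f (g x). Proof. by []. Qed.
Lemma escE a x : esc a x = a *: x. Proof. by []. Qed.
Lemma emulnE (f : endo) n x : (f *+ n) x = f x *+ n.
Proof. by elim: n => [|n IH]; rewrite ?mulr0n // !mulrS eaddE IH. Qed.
Lemma esumE I (r : seq I) (F : I -> endo) x : (\sum_(i <- r) F i) x = \sum_(i <- r) F i x.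
Proof. by elim: r => [|a r IH]; rewrite ?big_nil // !big_cons eaddE IH. Qed.
Lemma esc_comm a (f : endo) : esc a * f = f * esc a.
Proof. by apply: endoP => x; rewrite !emulE !escE (linZ (efP f)). Qed.
Lemma escM a b : esc (a * b) = esc a * esc b.
Proof. by apply: endoP => x; rewrite emulE !escE scalerA. Qed.
Lemma escD a b : esc (a + b) = esc a + esc b.
Proof. by apply: endoP => x; rewrite eaddE !escE scalerDl. Qed.
Lemma esc1 : esc 1 = 1.
Proof. by apply: endoP => x; rewrite escE scale1r. Qed.
Lemma escn n : esc n%:R = n%:R.
Proof. by apply: endoP => x; rewrite escE emulnE eoneE scaler_nat. Qed.
Lemma escX a n : esc (a ^+ n) = esc a ^+ n.
Proof. by elim: n => [|n IH]; rewrite ?expr0 ?esc1 // !exprS escM IH. Qed.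
Lemma escN a : esc (- a) = - esc a.
Proof. by apply: endoP => x; rewrite eoppE !escE scaleNr. Qed.
Lemma eexpE (f : endo) n x : (f ^+ n) x = iter n f x.
Proof. by elim: n => [|n IH]; rewrite ?expr0 // exprS emulE IH. Qed.

End EndoRing.
Lemma geom (R : comPzRingType) (z : R) j : 1 - z ^+ j = (1 - z) * \sum_(l < j) z ^+ l.
Proof. by rewrite -opprB subrX1 -mulNr opprB. Qed.

Lemma prod_exists (R : comPzRingType) (I : eqType) (r : seq I) (F G : I -> R) :
  (forall i, i \in r -> exists t, F i = G i * t) ->
  exists t, \prod_(i <- r) F i = \prod_(i <- r) G i * t.
Proof.
move=> H; elim: r H => [|a r IH] H; first by exists 1; rewrite !big_nil mulr1.
have [ta Ha] := H a (mem_head _ _).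
have [t Ht] : exists t, \prod_(i <- r) F i = \prod_(i <- r) G i * t.
  by apply: IH => i ir; apply: H; rewrite in_cons ir orbT.
by exists (ta * t); rewrite !big_cons Ha Ht mulrACA.
Qed.

Section NumFacts.
Variable (k : comNzRingType) (iota : {rmorphism k -> algC}).
Hypothesis iota_inj : injective iota.

Lemma k_dom (a b : k) : a != 0 -> a * b = 0 -> b = 0.
Proof.
move=> a0 ab; apply: iota_inj; rewrite rmorph0.
have : iota a * iota b = 0 by rewrite -rmorphM ab rmorph0.
move/eqP; rewrite mulf_eq0 => /orP [|/eqP //].
by move=> /eqP ia; case/eqP: a0; apply: iota_inj; rewrite ia rmorph0.
Qed.

Variables (p : nat) (zp : k).
Hypothesis pp : prime p.
Hypothesis zpP : p.-primitive_root (iota zp).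

Lemma zp_exp : zp ^+ p = 1.
Proof. by apply: iota_inj; rewrite rmorphXn rmorph1 (prim_expr_order zpP). Qed.

Lemma zp_neq1 : zp != 1.
Proof.
apply/eqP => z1; have := eq_prim_root_expr zpP 1 0.
rewrite expr1 expr0 z1 rmorph1 eqxx => /esym /eqP.
by rewrite modn_small ?prime_gt1 // mod0n.
Qed.

Lemma sum_zp : \sum_(j < p) zp ^+ j = 0.
Proof.
apply: (@k_dom (zp - 1)); first by rewrite subr_eq0 zp_neq1.
by rewrite -subrX1 zp_exp subrr.
Qed.

Lemma L_a : exists w, p%:R = (1 - zp) * w.
Proof.
exists (\sum_(j < p) \sum_(l < j) zp ^+ l).
transitivity (\sum_(j < p) (1 - zp ^+ j)).
  by rewrite sumrB sum_zp subr0 sumr_const card_ord.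
by rewrite mulr_sumr; apply: eq_bigr => j _; exact: geom.
Qed.

Lemma prodP : \prod_(1 <= i < p) (1 - iota zp ^+ i) = p%:R.
Proof.
set z := iota zp.
have H := factor_Xn_sub_1 zpP.
rewrite big_ltn ?prime_gt0 // expr0 subrX1 in H.
have H2 : \prod_(1 <= i < p) ('X - (z ^+ i)%:P) = \sum_(i < p) ('X : {poly algC}) ^+ i.
  apply: (mulfI (negbT (polyXsubC_eq0 (1 : algC)))); by rewrite H polyC1.
have := congr1 (fun q => q.[1]) H2.
rewrite horner_prod horner_sum /=.
under eq_bigr do rewrite hornerXsubC.
under [in RHS]eq_bigr do rewrite hornerXn expr1n.
by rewrite sumr_const card_ord.
Qed.

Lemma L_b : exists kap, (1 - zp) ^+ p.-1 = p%:R * kap.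
Proof.
have H : forall i, i \in index_iota 1 p -> exists t, (1 - zp) = (1 - zp ^+ i) * t.
  move=> i; rewrite mem_index_iota => /andP [i1 ip].
  have pz : p.-primitive_root (iota zp ^+ i).
    rewrite prim_root_exp_coprime // coprime_sym prime_coprime //.
    by apply/negP => /(dvdn_leq i1); rewrite leqNgt ip.
  have [j Hj] := prim_rootP pz (prim_expr_order zpP).
  exists (\sum_(l < j) (zp ^+ i) ^+ l).
  rewrite -geom -exprM; congr (1 - _); apply: iota_inj.
  by rewrite rmorphXn exprM -Hj.
have [t Ht] := prod_exists H.
exists t.
have -> : (1 - zp) ^+ p.-1 = \prod_(1 <= i < p) (1 - zp).
  by rewrite prodr_const_nat subn1.
rewrite Ht; congr (_ * _); apply: iota_inj.
by rewrite rmorph_prod rmorph_nat -prodP; apply: eq_bigr => i _; rewrite rmorphB rmorph1 rmorphXn.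
Qed.

Lemma L_c (a b : k) : iota b != 0 -> a ^+ p = b ^+ p -> exists kap, a - b = (1 - zp) * kap.
Proof.
move=> b0 ab.
have : (iota a / iota b) ^+ p = 1.
  by rewrite exprMn exprVn -!rmorphXn ab divff // rmorphXn expf_neq0.
move/(prim_rootP zpP) => [i Hi].
have ae : a = b * zp ^+ i.
  by apply: iota_inj; rewrite rmorphM rmorphXn -Hi mulrC divfK.
exists (- (b * \sum_(l < i) zp ^+ l)).
by rewrite ae mulrN mulrCA -geom -mulrN opprB mulrBr mulr1.
Qed.

End NumFacts.
Lemma sum_if_uniq (V : zmodType) (T : eqType) (r : seq T) (a : T) (X : V) :
  uniq r -> a \in r -> \sum_(w <- r) (if a == w then X else 0) = X.
Proof.
elim: r => [//|b r IH] /= /andP [br ur]; rewrite in_cons big_cons.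
have [ab|nab] := eqVneq a b.
  subst b => _; rewrite big1_seq ?addr0 // => w /= wr.
  by case: eqP => // aw; subst w; rewrite wr in br.
by move=> /= ar; rewrite IH // add0r.
Qed.

Lemma part_sum (V : zmodType) (T U : eqType) (s : seq T) (g : T -> U) (F : T -> V) :
  \sum_(z <- s) F z = \sum_(w <- undup (map g s)) \sum_(z <- s | g z == w) F z.
Proof.
under [RHS]eq_bigr do rewrite big_mkcond.
rewrite exchange_big /=; apply: eq_big_seq => z zs.
rewrite sum_if_uniq ?undup_uniq // mem_undup; exact: map_f.
Qed.

Lemma sum_mult (R : pzRingType) (V : lmodType R) (I : eqType) (r : seq I) (F : I -> V) (c : R) :
  (forall i, i \in r -> exists y, F i = c *: y) -> exists y, \sum_(i <- r) F i = c *: y.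
Proof.
elim: r => [|a r IH] H; first by exists 0; rewrite big_nil scaler0.
have [ya Ha] := H a (mem_head _ _).
have [y Hy] : exists y, \sum_(i <- r) F i = c *: y.
  by apply: IH => i ir; apply: H; rewrite in_cons ir orbT.
by exists (ya + y); rewrite big_cons Ha Hy scalerDr.
Qed.

Lemma le_exp_mono m l np : le_exp m np -> (l <= m)%N -> le_exp l np.
Proof. by case: np => //= n H lm; exact: leq_trans lm H. Qed.

Section Mod.
Variables (e : steinitz) (k : comNzRingType) (iota : {rmorphism k -> algC}).
Hypothesis iota_inj : injective iota.
Variable (M : lmodType k).
Hypothesis Hprime : forall r, prime r -> st_dvd r e -> forall x : M, x *+ r = 0 -> x = 0.

Definition mu a := in_mu e (iota a).

Lemma mu_pow a : mu a -> exists n, [/\ (0 < n)%N, a ^+ n = 1 &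
   forall r, prime r -> (r %| n)%N -> st_dvd r e].
Proof.
case=> n [n0 [pr H]]; exists n; split => //.
  by apply: iota_inj; rewrite rmorphXn rmorph1 (prim_expr_order pr).
move=> r rp rn; apply: le_exp_mono (H r rp) _.
by rewrite logn_gt0 mem_primes rp n0 rn.
Qed.

Lemma mu_nz a : mu a -> iota a != 0.
Proof.
case=> n [n0 [pr _]]; apply/eqP => a0.
by have := prim_expr_order pr; rewrite a0 expr0n eqn0Ngt n0 /= => /eqP; rewrite eq_sym oner_eq0.
Qed.

Lemma mu_exp a j : mu a -> mu (a ^+ j).
Proof.
case=> n [n0 [pr H]].
have : (iota (a ^+ j)) ^+ n = 1.
  by rewrite rmorphXn -exprM mulnC exprM (prim_expr_order pr) expr1n.
case/(prim_order_exists n0) => d pd dn.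
exists d; split; first exact: prim_order_gt0 pd.
split => // r rp; apply: le_exp_mono (H r rp) _; exact: dvdn_leq_log.
Qed.

Lemma Ninj N : (0 < N)%N -> (forall r, prime r -> (r %| N)%N -> st_dvd r e) ->
  forall x : M, x *+ N = 0 -> x = 0.
Proof.
elim/ltn_ind: N => N IH N0 HN x Hx.
have [N1|N1] := leqP N 1.
  have N1' : N = 1%N by apply/eqP; rewrite eqn_leq N1 N0.
  by rewrite N1' mulr1n in Hx.
set r := pdiv N.
have rp : prime r := pdiv_prime N1.
have Ne : N = (N %/ r * r)%N by rewrite divnK // pdiv_dvd.
have Nr0 : (0 < (N %/ r)%N)%N by rewrite divn_gt0 ?prime_gt0 // dvdn_leq // pdiv_dvd.
apply: (IH (N %/ r)%N _ _ _ x) => //.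
- by rewrite ltn_Pdiv // prime_gt1.
- move=> r' rp' rd; apply: HN => //; apply: dvdn_trans rd _.
  by rewrite {2}Ne dvdn_mulr.
- apply: (Hprime rp (HN r rp (pdiv_dvd N))).
  by rewrite -mulrnA -Ne.
Qed.

Lemma k_dom' (a b : k) : a != 0 -> a * b = 0 -> b = 0.
Proof.
move=> a0 ab; apply: iota_inj; rewrite rmorph0.
have : iota a * iota b = 0 by rewrite -rmorphM ab rmorph0.
move/eqP; rewrite mulf_eq0 => /orP [|/eqP //].
by move=> /eqP ia; case/eqP: a0; apply: iota_inj; rewrite ia rmorph0.
Qed.

Lemma diff_inj a b (x : M) : mu a -> mu b -> a != b -> a *: x = b *: x -> x = 0.
Proof.
move=> ma mb ab Hx.
have [na [na0 ha hna]] := mu_pow ma.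
have [nb [nb0 hb hnb]] := mu_pow mb.
set b' := b ^+ nb.-1.
have bb' : b' * b = 1 by rewrite /b' -exprSr prednK.
set c := a * b'.
have cx : c *: x = x by rewrite /c mulrC -scalerA Hx scalerA bb' scale1r.
have cN : c ^+ (na * nb) = 1.
  have b'n : b' ^+ nb = 1 by rewrite /b' -exprM mulnC exprM hb expr1n.
  by rewrite /c exprMn exprM ha expr1n mul1r -(mulnC nb) exprM b'n expr1n.
have c1 : c - 1 != 0.
  rewrite subr_eq0; apply/negP => /eqP c1; case/negP: ab; apply/eqP.
  by rewrite -[a]mulr1 -bb' mulrA -/c c1 mul1r.
have S0 : \sum_(i < na * nb) c ^+ i = 0.
  by apply: (k_dom' c1); rewrite -subrX1 cN subrr.
have ci : forall i, c ^+ i *: x = x.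
  by elim=> [|i IH]; rewrite ?expr0 ?scale1r // exprSr -scalerA cx IH.
apply: (@Ninj (na * nb)); first by rewrite muln_gt0 na0.
  by move=> r rp; rewrite Euclid_dvdM // => /orP [H|H]; [exact: hna | exact: hnb].
have := congr1 (fun t => t *: x) S0; rewrite /= scale0r scaler_suml.
by under eq_bigr do rewrite ci; rewrite sumr_const card_ord.
Qed.

Lemma indep (f : M -> M) (Hf : is_End f) (s : seq k) (v : k -> M) :
  uniq s -> (forall z, z \in s -> mu z) -> (forall z, z \in s -> f (v z) = z *: v z) ->
  \sum_(z <- s) v z = 0 -> forall z, z \in s -> v z = 0.
Proof.
elim: s v => [//|z1 s IH] v /= /andP [z1s us] Hmu Hv.
rewrite big_cons => Hsum.
have Hv1 := Hv z1 (mem_head _ _).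
have e1 : v z1 = - \sum_(z <- s) v z by apply/eqP; rewrite -addr_eq0 Hsum.
have Hs : \sum_(z <- s) (z - z1) *: v z = 0.
  have : f (v z1) = z1 *: v z1 by [].
  rewrite e1 linN // lin_sum // scalerN => /oppr_inj.
  under eq_big_seq => z zs do rewrite Hv ?in_cons ?zs ?orbT //.
  move=> H; under eq_bigr do rewrite scalerBl.
  by rewrite sumrB H -scaler_sumr subrr.
have H0 : forall z, z \in s -> (z - z1) *: v z = 0.
  apply: IH => //.
  - by move=> z zs; apply: Hmu; rewrite in_cons zs orbT.
  - move=> z zs; rewrite linZ // Hv ?in_cons ?zs ?orbT //.
    by rewrite !scalerA mulrC.
have H1 : forall z, z \in s -> v z = 0.
  move=> z zs; apply: (@diff_inj z z1).
  - by apply: Hmu; rewrite in_cons zs orbT.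
  - exact: Hmu (mem_head _ _).
  - by apply/eqP => zz; subst z; rewrite zs in z1s.
  - by apply/eqP; rewrite -subr_eq0 -scalerBl H0.
move=> z; rewrite in_cons => /orP [/eqP ->|]; last exact: H1.
by rewrite e1 big1_seq ?oppr0 // => z' /= /H1.
Qed.

Definition WD (f : M -> M) := forall x, exists (s : seq k) (v : k -> M),
  [/\ uniq s, (forall z, z \in s -> mu z), (forall z, z \in s -> f (v z) = z *: v z)
    & x = \sum_(z <- s) v z].

Lemma iter_eigen (f : M -> M) (Hf : is_End f) z x j :
  f x = z *: x -> iter j f x = z ^+ j *: x.
Proof.
move=> H; elim: j => [|j IH]; first by rewrite expr0 scale1r.
by rewrite iterS IH linZ // H scalerA -exprSr.
Qed.

Lemma WD_iter (f : M -> M) (Hf : is_End f) j : WD f -> WD (iter j f).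
Proof.
move=> H x; have [s [v [us ms ev ->]]] := H x.
exists (undup (map (fun z => z ^+ j) s)).
exists (fun w => \sum_(z <- s | z ^+ j == w) v z); split.
- exact: undup_uniq.
- by move=> w; rewrite mem_undup => /mapP [z zs ->]; apply: mu_exp; apply: ms.
- move=> w _; have Hi : is_End (iter j f).
    by elim: (j) => [|i IH] //; exact: End_comp Hf IH.
  rewrite lin_sum // scaler_sumr big_seq_cond [RHS]big_seq_cond.
  apply: eq_bigr => z /andP [zs /eqP zw]; rewrite -zw; apply: iter_eigen => //.
  exact: ev.
- exact: part_sum.
Qed.


Lemma End_iter (f : M -> M) j : is_End f -> is_End (iter j f).
Proof. by move=> Hf; elim: j => [|i IH] //; exact: End_comp Hf IH. Qed.

Section PC.
Variables (p q : nat) (zp zq : k).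
Hypothesis zpP : p.-primitive_root (iota zp).
Hypothesis zqP : q.-primitive_root (iota zq).
Variables (f g : M -> M).
Hypotheses (Hf : is_End f) (Hg : is_End g) (Wf : WD f) (Wg : WD g).
Hypothesis cfp : forall x, iter p f (g x) = g (iter p f x).
Hypothesis cgq : forall x, f (iter q g x) = iter q g (f x).

Lemma PC1 u z : mu z -> f u = z *: u ->
  exists y, f (g u) - g (f u) = ((1 - zp) * (1 - zq)) *: y.
Proof.
move=> mz fu.
have [t [w [ut mt gw ue]]] := Wg u.
have Hfp := End_iter p Hf.
have Hgq := End_iter q Hg.
have SA : forall h, h \in t -> iter p f (w h) = z ^+ p *: w h.
  move=> h ht; apply/eqP; rewrite -subr_eq0; apply/eqP.
  apply: (@indep g Hg t (fun h => iter p f (w h) - z ^+ p *: w h) ut mt _ _ h ht).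
    move=> h' h't /=; rewrite (linB Hg) (linZ Hg) -cfp gw // (linZ Hfp).
    by rewrite scalerBr !scalerA mulrC.
  rewrite sumrB -(lin_sum Hfp) -scaler_sumr -ue (iter_eigen Hf p fu) subrr //.
have SA' : forall h, h \in t -> exists y, f (w h) - z *: w h = (1 - zp) *: y.
  move=> h ht; have [s' [u' [us' ms' fu' we]]] := Wf (w h).
  have Z : forall z', z' \in s' -> (z' ^+ p - z ^+ p) *: u' z' = 0.
    apply: (indep Hf us' ms').
      by move=> z' z's; rewrite (linZ Hf) fu' // !scalerA mulrC.
    under eq_bigr do rewrite scalerBl.
    rewrite sumrB -scaler_sumr -we -(SA h ht) we (lin_sum Hfp).
    rewrite -sumrB big1_seq // => z' /= z's.
    by rewrite (iter_eigen Hf p (fu' z' z's)) subrr.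
  rewrite we (lin_sum Hf) scaler_sumr -sumrB.
  apply: sum_mult => z' z's.
  rewrite fu' // -scalerBl.
  have [E|NE] := eqVneq (z' ^+ p) (z ^+ p).
    have [kap Hk] := L_c iota_inj zpP (mu_nz mz) E.
    by exists (kap *: u' z'); rewrite Hk scalerA.
  have u0 : u' z' = 0.
    apply: (diff_inj (mu_exp p (ms' z' z's)) (mu_exp p mz) NE).
    by apply/eqP; rewrite -subr_eq0 -scalerBl Z.
  by exists 0; rewrite u0 !scaler0.
set t' := undup (map (fun h => h ^+ q) t).
set W := fun xi => \sum_(h <- t | h ^+ q == xi) w h.
have gW : forall xi, iter q g (W xi) = xi *: W xi.
  move=> xi; rewrite /W (lin_sum Hgq) scaler_sumr big_seq_cond [RHS]big_seq_cond.
  by apply: eq_bigr => h /andP [ht /eqP hq]; rewrite (iter_eigen Hg q (gw h ht)) hq.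
have mt' : forall xi, xi \in t' -> mu xi.
  by move=> xi; rewrite mem_undup => /mapP [h ht ->]; apply: mu_exp; apply: mt.
have SC : forall xi, xi \in t' -> f (W xi) = z *: W xi.
  move=> xi xit; apply/eqP; rewrite -subr_eq0; apply/eqP.
  apply: (@indep (iter q g) Hgq t' (fun xi => f (W xi) - z *: W xi) (undup_uniq _) mt' _ _ xi xit).
    move=> xi' _ /=; rewrite (linB Hgq) (linZ Hgq) -cgq gW (linZ Hf).
    by rewrite scalerBr !scalerA mulrC.
  rewrite sumrB -(lin_sum Hf) -scaler_sumr /W -part_sum -ue fu subrr //.
set R := fun xi => nth 0 t (find (fun h => h ^+ q == xi) t).
have HR : forall h, h \in t -> R (h ^+ q) \in t /\ R (h ^+ q) ^+ q = h ^+ q.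
  move=> h ht; have hs : has (fun h' => h' ^+ q == h ^+ q) t by apply/hasP; exists h.
  split; first by rewrite /R mem_nth // -has_find.
  by apply/eqP; exact: (nth_find 0 hs).
set Y := fun h => f (w h) - z *: w h.
have E1 : f (g u) - g (f u) = \sum_(h <- t) h *: Y h.
  rewrite fu (linZ Hg) ue (lin_sum Hg) (lin_sum Hf) scaler_sumr -sumrB.
  by apply: eq_big_seq => h ht; rewrite /Y gw // (linZ Hf) scalerBr !scalerA (mulrC h z).
have E2 : \sum_(h <- t) R (h ^+ q) *: Y h = 0.
  rewrite (part_sum _ (fun h => h ^+ q)) -/t'.
  rewrite big_seq big1 // => xi xit.
  transitivity (\sum_(h <- t | h ^+ q == xi) R xi *: Y h).
    by apply: eq_bigr => h /eqP ->.
  by rewrite -scaler_sumr /Y sumrB -(lin_sum Hf) -scaler_sumr -/(W xi) SC // subrr scaler0.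
rewrite E1.
have -> : \sum_(h <- t) h *: Y h = \sum_(h <- t) h *: Y h - \sum_(h <- t) R (h ^+ q) *: Y h.
  by rewrite E2 subr0.
rewrite -sumrB.
apply: sum_mult => h ht.
have [Rt Rq] := HR h ht.
have [kap Hk] := L_c iota_inj zqP (mu_nz (mt _ Rt)) (esym Rq).
have [y Hy] := SA' h ht.
exists (kap *: y).
by rewrite -scalerBl Hk /Y Hy !scalerA mulrAC (mulrC (1 - zq)).
Qed.

Lemma PC x : exists y, f (g x) - g (f x) = ((1 - zp) * (1 - zq)) *: y.
Proof.
have [s [u [us ms fu ->]]] := Wf x.
rewrite (lin_sum Hg) (lin_sum Hf) (lin_sum Hf) (lin_sum Hg) -sumrB; apply: sum_mult => z zs.
exact: PC1 (ms z zs) (fu z zs).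
Qed.

End PC.

End Mod.

Section Main.
Variables (e : steinitz) (k : comNzRingType) (iota : {rmorphism k -> algC}).
Hypothesis iota_inj : injective iota.
Hypothesis iota_img : forall x : algC, in_Zmu e x <-> exists a : k, x = iota a.
Variables (M : lmodType k) (A : (M -> M) -> Prop).
Hypothesis hA : is_subalg A.
Hypothesis hgood : forall p, prime p -> st_dvd p e ->
     p_good p A /\
     forall zp : k, p.-primitive_root (iota zp) ->
       forall f : M -> M,
         (exists g, A g /\ f = (fun x => (1 - zp) *: g x)) <->
         (A f /\ exists h, is_End h /\ f = (fun x => (1 - zp) *: h x)).
Variables (rho sigma : M -> M).
Hypothesis htors : torsion2 rho sigma.

Lemma A_End f : A f -> is_End f.
Proof. by case: hA => H _; apply: H. Qed.

Lemma Hprime r : prime r -> st_dvd r e -> forall x : M, x *+ r = 0 -> x = 0.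
Proof.
move=> rp rd x Hx; have [Hg _] := hgood rp rd.
case: hA => _ [_ A0 _ _ _].
apply: (Hg _ A0) => /=; by rewrite !mul0rn !subr0 Hx mul0rn.
Qed.

Lemma zp_ex p : prime p -> st_dvd p e -> exists zp : k, p.-primitive_root (iota zp).
Proof.
move=> pp pd; have [z zP] := C_prim_root_exists (prime_gt0 pp).
have : in_Zmu e z.
  move=> S _ _ _ H; apply: H; exists p; split; first exact: prime_gt0.
  split => // r rp; rewrite logn_prime //; case: eqP => [->|_] //.
  by rewrite /le_exp; case: (e r).
case/iota_img => a za; exists a; by rewrite -za.
Qed.

Notation endo := (endo M).
Local Notation sc := (@esc _ M).
Definition AE (f : endo) := A (ef f).

Lemma AE1 : AE 1. Proof. by case: hA => _ []. Qed.
Lemma AE0 : AE 0. Proof. by case: hA => _ []. Qed.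
Lemma AED f g : AE f -> AE g -> AE (f + g). Proof. by case: hA => _ [_ _ H _ _]; apply: H. Qed.
Lemma AEM f g : AE f -> AE g -> AE (f * g). Proof. by case: hA => _ [_ _ _ _ H]; apply: H. Qed.
Lemma AEsc a f : AE f -> AE (sc a * f). Proof. by case: hA => _ [_ _ _ H _]; apply: H. Qed.
Lemma AEsc1 a : AE (sc a). Proof. by rewrite -[sc a]mulr1; apply: AEsc; apply: AE1. Qed.
Lemma AEN f : AE f -> AE (- f).
Proof.
move=> H; have -> : - f = sc (-1) * f by apply: endoP => x; rewrite emulE escE scaleN1r.
exact: AEsc.
Qed.
Lemma AEB f g : AE f -> AE g -> AE (f - g). Proof. by move=> *; apply: AED => //; apply: AEN. Qed.
Lemma AEX f n : AE f -> AE (f ^+ n).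
Proof. move=> H; elim: n => [|n IH]; first by rewrite expr0; apply: AE1. by rewrite exprS; apply: AEM. Qed.
Lemma AEMn f n : AE f -> AE (f *+ n).
Proof. move=> H; elim: n => [|n IH]; first by rewrite mulr0n; apply: AE0. by rewrite mulrS; apply: AED. Qed.
Lemma AEsum n (F : nat -> endo) : (forall i, AE (F i)) -> AE (\sum_(i < n) F i).
Proof.
move=> H; elim: n => [|n IH]; first by rewrite big_ord0; apply: AE0.
by rewrite big_ord_recr /=; apply: AED.
Qed.

Definition inj (f : endo) := forall x, f x = 0 -> x = 0.

Lemma inj_mulr a b : inj (a * b) -> inj b.
Proof. by move=> H x bx; apply: H; rewrite emulE bx (lin0 (efP a)). Qed.
Lemma inj_mul a b : inj a -> inj b -> inj (a * b).
Proof. by move=> Ha Hb x /Ha /Hb. Qed.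

Lemma inj_good p s : prime p -> st_dvd p e -> AE s -> inj (1 - p%:R * s).
Proof.
move=> pp pd As x Hx; have [Hg _] := hgood pp pd.
have H := Hg _ As x 0; rewrite /= (lin0 (efP s)) mul0rn subr0 mul0rn in H.
apply: H; move: Hx; rewrite esubE eoneE emulE emulnE eoneE => ->; by rewrite mul0rn.
Qed.

Lemma inj_nat p : prime p -> st_dvd p e -> inj p%:R.
Proof. by move=> pp pd x; rewrite emulnE eoneE; apply: Hprime. Qed.

Section Lam.
Variables (p : nat) (zp : k).
Hypotheses (pp : prime p) (pd : st_dvd p e) (zpP : p.-primitive_root (iota zp)).

Lemma lam_inj (x : M) : (1 - zp) *: x = 0 -> x = 0.
Proof.
move=> Hx; have [w Hw] := L_a iota_inj pp zpP.
apply: (Hprime pp pd); rewrite -scaler_nat Hw mulrC -scalerA Hx scaler0 //.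
Qed.

Lemma inj_1lam Z : AE Z -> inj (1 + sc (1 - zp) * Z).
Proof.
move=> AZ; have [kap Hk] := L_b iota_inj pp zpP.
set N := p.-1.
set u := sc (1 - zp) * Z.
set S := \sum_(i < N) (- u) ^+ i.
set s := sc ((-1) ^+ N * kap) * Z ^+ N.
have As : AE s by apply: AEsc; apply: AEX.
have E1 : (- u) ^+ N = p%:R * s.
  have -> : - u = sc (- (1 - zp)) * Z by rewrite escN mulNr.
  rewrite exprMn_comm; last exact: esc_comm.
  rewrite -escX exprNn Hk /s mulrA [RHS]mulrA -escn -escM; congr (sc _ * _).
  by rewrite !mulrA (mulrC p%:R).
have cS : GRing.comm (1 + u) S.
  apply: commr_sum => i _; apply: commrX; apply: commrN.
  apply: commr_sym; apply: commrD; [exact: commr1 | exact: commr_refl].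
have E2 : S * (1 + u) = 1 - p%:R * s.
  rewrite -cS -E1; apply/eqP; rewrite -(inj_eq (@oppr_inj _)) opprB.
  by rewrite subrX1 -mulNr opprD addrC.
by apply: (@inj_mulr S); rewrite E2; apply: inj_good.
Qed.

Lemma sat (h : M -> M) : is_End h -> A (fun x => (1 - zp) *: h x) -> A h.
Proof.
move=> Hh Ah; have [_ Hid] := hgood pp pd.
have [g [Ag Eg]] := (Hid zp zpP (fun x => (1 - zp) *: h x)).2 (conj Ah (ex_intro _ h (conj Hh erefl))).
have -> : h = g; last by [].
apply: funext => x; apply/eqP; rewrite -subr_eq0; apply/eqP; apply: lam_inj.
by rewrite scalerBr (congr1 (fun F => F x) Eg) subrr.
Qed.

End Lam.


Lemma div_lemma (T : M -> M) (c : k) : is_End T -> (forall y : M, c *: y = 0 -> y = 0) ->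
  (forall x, exists y, T x = c *: y) -> exists h, is_End h /\ forall x, T x = c *: h x.
Proof.
move=> HT cinj H.
pose h x := sval (cid (H x)).
have Hh : forall x, T x = c *: h x by move=> x; rewrite /h; case: (cid (H x)).
exists h; split => // a x y.
apply/eqP; rewrite -subr_eq0; apply/eqP; apply: cinj.
by rewrite scalerBr -Hh scalerDr scalerA mulrC -scalerA -!Hh HT subrr.
Qed.

Lemma SL n (c : nat -> k) al y : AE y -> (forall i, (i < n)%N -> exists d, c i.+1 = al * d) ->
  exists Z, AE Z /\ \sum_(i < n) sc (c i.+1) * y ^+ i.+1 = sc al * Z.
Proof.
move=> Ay; elim: n => [|n IH] H.
  by exists 0; split; [apply: AE0 | rewrite big_ord0 mulr0].
have [Z [AZ EZ]] : exists Z, AE Z /\ \sum_(i < n) sc (c i.+1) * y ^+ i.+1 = sc al * Z.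
  by apply: IH => i ilt; apply: H; apply: ltn_trans ilt _.
have [d Hd] := H n (ltnSn n).
exists (Z + sc d * y ^+ n.+1); split.
  by apply: AED => //; apply: AEsc; apply: AEX.
by rewrite big_ord_recr /= EZ Hd escM mulrDr mulrA.
Qed.

Lemma binom_t l y al : (1 + sc al * y) ^+ l =
  1 + (\sum_(i < l) sc ('C(l, i.+1)%:R * al ^+ i) * y ^+ i) * (sc al * y).
Proof.
rewrite addrC exprD1n big_ord_recl /= expr0 bin0 mulr1n; congr (1 + _).
rewrite mulr_suml; apply: eq_bigr => i _.
rewrite exprMn_comm; last exact: esc_comm.
rewrite -mulrA (mulrA (y ^+ i)) -(esc_comm al (y ^+ i)) -mulrA -exprSr mulrA -escM.
rewrite -escX -mulrnAl /bump /= add1n; congr (_ * _).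
by rewrite -mulrA -exprSr escM escn mulr_natl.
Qed.

Definition Fpol l (kap : k) (y : endo) := \sum_(i < l) sc ('C(l, i.+1)%:R * kap ^+ i) * y ^+ i.

Lemma Fpol_split l kap y Z al : (0 < l)%N ->
  \sum_(i < l.-1) sc ('C(l, i.+2)%:R * kap ^+ i.+1) * y ^+ i.+1 = sc al * Z ->
  Fpol l kap y = l%:R + sc al * Z.
Proof.
case: l => // l _ /= H; rewrite /Fpol big_ord_recl /= expr0 mulr1 bin1 expr0 mulr1 escn.
by congr (_ + _); rewrite -H; apply: eq_bigr => i _; rewrite /bump /= add1n.
Qed.

Lemma F_inj_ne l r zr mu y : prime l -> prime r -> st_dvd r e -> r.-primitive_root (iota zr) ->
  l != r -> AE y -> inj (Fpol l ((1 - zr) * mu) y).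
Proof.
move=> lp rp rd zrP lr Ay.
set kap := (1 - zr) * mu.
have Hc : forall i, (i < l.-1)%N -> exists d,
    (fun j => 'C(l, j.+1)%:R * kap ^+ j) i.+1 = (1 - zr) * d.
  move=> i _; exists ('C(l, i.+2)%:R * kap ^+ i * mu).
  by rewrite /= exprSr /kap; ring.
have [Z [AZ EZ]] := @SL l.-1 (fun j => 'C(l, j.+1)%:R * kap ^+ j) (1 - zr) y Ay Hc.
rewrite (Fpol_split (prime_gt0 lp) EZ).
have cop : coprime r l by rewrite prime_coprime // dvdn_prime2 // eq_sym.
have [a _ Ha] := Bezoutl l (prime_gt0 rp).
rewrite (eqnP cop) in Ha.
set b := ((1 + a * l) %/ r)%N.
have Hb : (1 + a * l = b * r)%N by rewrite /b divnK.
have [w Hw] := L_a iota_inj rp zrP.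
apply: (@inj_mulr (sc (- a%:R))).
have -> : sc (- a%:R) * (l%:R + sc (1 - zr) * Z) =
          1 + sc (1 - zr) * (sc (- (b%:R * w)) + sc (- a%:R) * Z).
  rewrite mulrDr -escn -escM [in LHS]mulrA -escM [in RHS]mulrDr [in RHS]mulrA -!escM.
  have E : - a%:R * l%:R = 1 + (1 - zr) * - (b%:R * w) :> k.
    have Hb' : 1 + a%:R * l%:R = b%:R * r%:R :> k.
      by move: (congr1 (fun n => n%:R : k) Hb); rewrite /= natrD !natrM.
    transitivity (1 - b%:R * r%:R : k); first by rewrite -Hb'; ring.
    by rewrite Hw; ring.
  by rewrite E escD esc1 -addrA (mulrC (- a%:R)).
apply: (inj_1lam rp rd zrP); apply: AED; [exact: AEsc1 | exact: AEsc].
Qed.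

Lemma F_inj_eq p zp S y : prime p -> st_dvd p e -> p.-primitive_root (iota zp) ->
  AE y -> inj (Fpol p ((1 - zp) * (1 - zp) * S) y).
Proof.
move=> pp pd zpP Ay.
set kap := (1 - zp) * (1 - zp) * S.
have [w Hw] := L_a iota_inj pp zpP.
have [bet Hk] := L_b iota_inj pp zpP.
have Hc : forall i, (i < p.-1)%N -> exists d,
    (fun j => 'C(p, j.+1)%:R * kap ^+ j) i.+1 = (p%:R * (1 - zp)) * d.
  move=> i ip /=.
  have [lt|ge] := ltnP i.+2 p.
    have pC : (p %| 'C(p, i.+2))%N by apply: prime_dvd_bin.
    exists (('C(p, i.+2) %/ p)%:R * kap ^+ i * (1 - zp) * S).
    rewrite -{1}(divnK pC) natrM exprSr /kap; ring.
  have E : i.+2 = p by apply/eqP; rewrite eqn_leq ge andbT; move: ip; case: (p).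
  exists (w * bet ^+ 2 * S ^+ p.-1).
  have -> : i.+1 = p.-1 by rewrite -E.
  rewrite (prednK (prime_gt0 pp)) binn mul1r /kap !exprMn Hk.
  have -> : p%:R * (1 - zp) * (w * bet ^+ 2 * S ^+ p.-1) = p%:R * ((1 - zp) * w) * bet ^+ 2 * S ^+ p.-1 by ring.
  rewrite -Hw; ring.
have [Z [AZ EZ]] := @SL p.-1 (fun j => 'C(p, j.+1)%:R * kap ^+ j) (p%:R * (1 - zp)) y Ay Hc.
rewrite (Fpol_split (prime_gt0 pp) EZ) escM escn -mulrA -{1}(mulr1 p%:R) -mulrDr.
apply: inj_mul; first exact: inj_nat.
exact: (inj_1lam pp pd zpP).
Qed.

Section MLs.
Variables (p q : nat) (zp zq : k).
Hypotheses (pp : prime p) (pd : st_dvd p e) (zpP : p.-primitive_root (iota zp)).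
Hypotheses (qp : prime q) (qd : st_dvd q e) (zqP : q.-primitive_root (iota zq)).

Definition kap := (1 - zp) * (1 - zq).
Definition J (t : endo) := exists y, AE y /\ t = sc kap * y.

Lemma ML_prime l t : prime l -> J t -> (1 + t) ^+ l = 1 -> t = 0.
Proof.
move=> lp [y [Ay ->]].
rewrite binom_t -{2}(addr0 1) => /addrI H0.
have Finj : inj (Fpol l kap y).
  have [lpe|lpn] := eqVneq l p; last first.
    rewrite /kap; exact: F_inj_ne lp pp pd zpP lpn Ay.
  have [lqe|lqn] := eqVneq l q; last first.
    rewrite /kap mulrC; exact: F_inj_ne lp qp qd zqP lqn Ay.
  subst l; subst q.
  have [j Hj] := prim_rootP zpP (prim_expr_order zqP).
  have zqe : zq = zp ^+ j by apply: iota_inj; rewrite rmorphXn.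
  rewrite /kap zqe geom mulrA; exact: F_inj_eq pp pd zpP Ay.
apply: endoP => x; rewrite ezeroE; apply: Finj.
by rewrite -emulE H0 ezeroE.
Qed.

Lemma J_pow t m : J t -> exists t', J t' /\ (1 + t) ^+ m = 1 + t'.
Proof.
move=> [y [Ay ->]]; elim: m => [|m [t' [[y' [Ay' ->]] IH]]].
  by exists 0; split; [exists 0; split; [apply: AE0 | rewrite mulr0] | rewrite expr0 addr0].
exists (sc kap * (y + y' + y' * (sc kap * y))); split.
  exists (y + y' + y' * (sc kap * y)); split => //.
  by apply: AED; [apply: AED | apply: AEM => //; apply: AEsc].
rewrite exprSr IH mulrDl mul1r mulrDr mulr1 !mulrDr -!addrA; congr (_ + _).
by rewrite [in RHS]mulrA.
Qed.

Lemma ML N t : (0 < N)%N -> J t -> (1 + t) ^+ N = 1 -> t = 0.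
Proof.
elim/ltn_ind: N t => N IH t N0 Jt HN.
have [N1|N1] := leqP N 1.
  have N1' : N = 1%N by apply/eqP; rewrite eqn_leq N1 N0.
  by move: HN; rewrite N1' expr1 -{2}(addr0 1) => /addrI.
set l := pdiv N.
have lp : prime l := pdiv_prime N1.
have Ne : N = ((N %/ l) * l)%N by rewrite divnK // pdiv_dvd.
have [t' [Jt' Et']] := J_pow (N %/ l)%N Jt.
have t'0 : t' = 0.
  apply: (ML_prime lp Jt'); by rewrite -Et' -exprM -Ne.
apply: (IH (N %/ l)%N) => //.
- by rewrite ltn_Pdiv // prime_gt1.
- by rewrite divn_gt0 ?prime_gt0 // dvdn_leq // pdiv_dvd.
- by rewrite Et' t'0 addr0.
Qed.

End MLs.

Definition P (f : endo) := [/\ AE f, WD e iota (ef f) & gen2 rho sigma (ef f)].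

Lemma ef_exp (f : endo) n : ef (f ^+ n) = iter n (ef f).
Proof. by apply: funext => x; rewrite eexpE. Qed.

Lemma P_pow f n : P f -> P (f ^+ n).
Proof.
case=> Af Wf Gf; split; first exact: AEX.
  by rewrite ef_exp; apply: WD_iter => //; exact: efP.
rewrite ef_exp; elim: n => [|n IH] /=; first exact: gen2_id.
exact: gen2_comp.
Qed.

Lemma gen2_mul (f g : endo) : gen2 rho sigma (ef f) -> gen2 rho sigma (ef g) -> gen2 rho sigma (ef (f * g)).
Proof. exact: gen2_comp. Qed.

Lemma torsion_endo (f : endo) : gen2 rho sigma (ef f) -> exists N, (0 < N)%N /\ f ^+ N = 1.
Proof.
move=> /htors [N [N0 HN]]; exists N; split => //.
by apply: endoP => x; rewrite eexpE HN eoneE.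
Qed.

Lemma mu1 : mu e iota 1.
Proof.
have h1 : (iota 1) ^+ 1 = 1 by rewrite rmorph1 expr1.
have [m pm m1] := prim_order_exists (ltn0Sn 0) h1.
exists m; split; first exact: prim_order_gt0 pm.
split => // r _; apply: le_exp_mono (_ : le_exp 0 (e r)) _.
  by rewrite /le_exp; case: (e r).
by have := dvdn_leq_log r (ltn0Sn 0) m1; rewrite logn1.
Qed.

Lemma TRIV p a (f : endo) : prime p -> ~ st_dvd p e -> P f -> f ^+ (p ^ a) = 1 -> f = 1.
Proof.
move=> pp nd [_ Wf _] fo; apply: endoP => x; rewrite eoneE.
have [s [v [us ms fv ->]]] := Wf x.
rewrite (lin_sum (efP f)); apply: eq_big_seq => z zs.
have ev := fv z zs.
have hz : z ^+ (p ^ a) *: v z = v z.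
  by rewrite -(iter_eigen (efP f) _ ev) -eexpE fo eoneE.
have [z1|z1] := eqVneq z 1; first by rewrite ev z1 scale1r.
have [zpa|zpa] := eqVneq (z ^+ (p ^ a)) 1; last first.
  have v0 : v z = 0.
    apply: (diff_inj iota_inj Hprime (mu_exp _ (ms z zs)) mu1 zpa).
    by rewrite hz scale1r.
  by rewrite ev v0 scaler0.
exfalso; apply: nd.
case: (ms z zs) => n0 [n00 [pn0 Hn0]].
have dv : (n0 %| p ^ a)%N by rewrite (prim_order_dvd pn0) -rmorphXn zpa rmorph1.
have n01 : (1 < n0)%N.
  rewrite ltn_neqAle eq_sym n00 andbT; apply/eqP => n01; subst n0.
  case/eqP: z1; apply: iota_inj; rewrite rmorph1.
  by have := prim_expr_order pn0; rewrite expr1.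
have rp := pdiv_prime n01.
have rn := pdiv_dvd n0.
have rpp : pdiv n0 = p.
  apply/eqP; rewrite -dvdn_prime2 //.
  by have := dvdn_trans rn dv; rewrite Euclid_dvdX // => /andP [].
apply: le_exp_mono (Hn0 p pp) _.
by rewrite logn_gt0 mem_primes pp (ltnW n01) -rpp rn.
Qed.

Lemma comm1 (g : endo) : GRing.comm 1 g.
Proof. exact: commr_sym (commr1 g). Qed.

Lemma exp_inv (f : endo) N : (0 < N)%N -> f ^+ N = 1 ->
  f * f ^+ N.-1 = 1 /\ f ^+ N.-1 * f = 1.
Proof. by move=> N0 fN; rewrite -exprS -exprSr prednK. Qed.

Lemma CL p q : prime p -> prime q -> forall n a b (f g : endo), (a + b <= n)%N ->
  P f -> P g -> f ^+ (p ^ a) = 1 -> g ^+ (q ^ b) = 1 -> GRing.comm f g.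
Proof.
move=> pp qp; elim=> [|n IH] a b f g abn Pf Pg fo go.
  move: abn; rewrite leqn0 addn_eq0 => /andP [/eqP a0 _].
  by move: fo; rewrite a0 expn0 expr1 => ->; exact: comm1.
case: a fo abn => [|a] fo abn.
  by move: fo; rewrite expn0 expr1 => ->; exact: comm1.
case: b go abn => [|b] go abn.
  by move: go; rewrite expn0 expr1 => ->; exact: commr1.
case: (pselect (st_dvd p e)) => [pd|nd]; last first.
  by rewrite (TRIV pp nd Pf fo); exact: comm1.
case: (pselect (st_dvd q e)) => [qd|nd]; last first.
  by rewrite (TRIV qp nd Pg go); exact: commr1.
have [zp zpP] := zp_ex pp pd.
have [zq zqP] := zp_ex qp qd.
have IH1 : GRing.comm (f ^+ p) g.
  apply: (IH a b.+1) => //.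
  - exact: P_pow.
  - by rewrite -exprM -expnS.
have IH2 : GRing.comm f (g ^+ q).
  apply: (IH a.+1 b) => //.
  - by move: abn; rewrite addnS.
  - exact: P_pow.
  - by rewrite -exprM -expnS.
case: (Pf) => Af Wf Gf; case: (Pg) => Ag Wg Gg.
have cfp : forall x, iter p (ef f) (ef g x) = ef g (iter p (ef f) x).
  by move=> x; rewrite -!eexpE -!emulE IH1.
have cgq : forall x, ef f (iter q (ef g) x) = iter q (ef g) (ef f x).
  by move=> x; rewrite -!eexpE -!emulE IH2.
have Hpc := PC iota_inj Hprime zpP zqP (efP f) (efP g) Wf Wg cfp cgq.
set fi := f ^+ (p ^ a.+1).-1.
set gi := g ^+ (q ^ b.+1).-1.
have pa0 : (0 < p ^ a.+1)%N by rewrite expn_gt0 prime_gt0.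
have [ffi fif] := exp_inv pa0 fo.
have qb0 : (0 < q ^ b.+1)%N by rewrite expn_gt0 prime_gt0.
have [ggi gig] := exp_inv qb0 go.
set c := f * g * fi * gi.
have Hc : forall x, exists y, (c - 1) x = (kap zp zq) *: y.
  move=> x; have [y Hy] := Hpc (fi (gi x)); exists y; rewrite -Hy esubE eoneE.
  congr (_ - _).
  by rewrite -[in RHS](emulE f fi) ffi eoneE -emulE ggi eoneE.
have kinj : forall y : M, kap zp zq *: y = 0 -> y = 0.
  move=> y; rewrite /kap -scalerA => /(lam_inj pp pd zpP).
  exact: (lam_inj qp qd zqP).
have [h [Hh Eh]] := div_lemma (efP (c - 1)) kinj Hc.
have Ac : AE (c - 1).
  apply: AEB; last exact: AE1.
  by apply: AEM; [apply: AEM; [apply: AEM|] | ]; rewrite // /fi /gi; apply: AEX.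
have Ah : A h.
  apply: (sat qp qd zqP Hh).
  apply: (sat pp pd zpP); first exact: End_comp (End_sc _) Hh.
  have -> : (fun x => (1 - zp) *: ((1 - zq) *: h x)) = ef (c - 1).
    by apply: funext => x; rewrite Eh /kap scalerA.
  exact: Ac.
have Jc : J zp zq (c - 1).
  exists (Endo Hh); split; first exact: Ah.
  by apply: endoP => x; rewrite Eh emulE escE.
have Gc : gen2 rho sigma (ef c).
  apply: gen2_mul; [apply: gen2_mul; [apply: gen2_mul|]|] => //.
    by case: (P_pow (p ^ a.+1).-1 Pf).
  by case: (P_pow (q ^ b.+1).-1 Pg).
have [N [N0 HN]] := torsion_endo Gc.
have c1 : c - 1 = 0.
  apply: (ML pp pd zpP qp qd zqP N0 Jc).
  by rewrite addrC subrK.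
have c1' : c = 1 by apply/eqP; rewrite -subr_eq0 c1.
rewrite /GRing.comm.
have -> : f * g = c * (g * f).
  by rewrite /c -!mulrA (mulrA gi) gig mul1r fif mulr1.
by rewrite c1' mul1r.
Qed.

Lemma split_comm (f g : endo) n1 n2 : coprime n1 n2 -> (0 < n1)%N -> f ^+ (n1 * n2) = 1 ->
  GRing.comm (f ^+ n1) g -> GRing.comm (f ^+ n2) g -> GRing.comm f g.
Proof.
move=> cop n10 fo H1 H2.
have [a _ Ha] := Bezoutl n2 n10.
rewrite (eqnP cop) in Ha.
set c := ((1 + a * n2) %/ n1)%N.
have Hc : (c * n1 = 1 + a * n2)%N by rewrite /c divnK.
have Ef : f = (f ^+ n1) ^+ c * (f ^+ n2) ^+ (a * n1.-1).
  rewrite -!exprM -exprD (mulnC n1) Hc.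
  have -> : (1 + a * n2 + n2 * (a * n1.-1) = 1 + (n1 * n2) * a)%N.
    by rewrite -addnA; congr (1 + _)%N; nia.
  by rewrite exprD expr1 exprM fo expr1n mulr1.
apply: commr_sym; rewrite Ef; apply: commrM; apply: commrX; exact: commr_sym.
Qed.

Lemma PPS n : (1 < n)%N -> (exists p a, prime p /\ n = (p ^ a)%N) \/
  (exists n1 n2, [/\ (1 < n1)%N, (1 < n2)%N, coprime n1 n2 & n = (n1 * n2)%N]).
Proof.
move=> n1; have pp := pdiv_prime n1.
have n0 : (0 < n)%N by apply: ltnW.
have [n' cop E] := pfactor_coprime pp n0.
have [e1|ne1] := eqVneq n' 1%N.
  by left; exists (pdiv n), (logn (pdiv n) n); split => //; rewrite {1}E e1 mul1n.
right; exists (pdiv n ^ logn (pdiv n) n)%N, n'; split.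
- rewrite -{1}(expn0 (pdiv n)) ltn_exp2l ?prime_gt1 // logn_gt0 mem_primes pp n0.
  exact: pdiv_dvd.
- rewrite ltn_neqAle eq_sym ne1 /=; move: n0; rewrite E muln_gt0 => /andP [] //.
- exact: coprimeXl.
- by rewrite {1}E mulnC.
Qed.

Lemma GEN : forall n (f : endo), P f -> (0 < n)%N -> f ^+ n = 1 ->
  forall m (g : endo), P g -> (0 < m)%N -> g ^+ m = 1 -> GRing.comm f g.
Proof.
elim/ltn_ind => n IHn f Pf n0 fn.
have [n1|n1] := leqP n 1.
  have e1 : n = 1%N by apply/eqP; rewrite eqn_leq n1 n0.
  by move: fn; rewrite e1 expr1 => -> *; exact: comm1.
have [[p [a [pp E]]] | [n1' [n2 [h1 h2 cop E]]]] := PPS n1; last first.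
  move=> m g Pg m0 gm.
  apply: (@split_comm f g n1' n2 cop (ltnW h1)); first by rewrite -E.
  - apply: (IHn n2 _ (f ^+ n1') (P_pow n1' Pf) (ltnW h2) _ m g Pg m0 gm).
      by rewrite E (ltn_Pmull h1 (ltnW h2)).
    by rewrite -exprM -E.
  - apply: (IHn n1' _ (f ^+ n2) (P_pow n2 Pf) (ltnW h1) _ m g Pg m0 gm).
      by rewrite E (ltn_Pmulr h2 (ltnW h1)).
    by rewrite -exprM mulnC -E.
elim/ltn_ind => m IHm g Pg m0 gm.
have [m1|m1] := leqP m 1.
  have e1 : m = 1%N by apply/eqP; rewrite eqn_leq m1 m0.
  by move: gm; rewrite e1 expr1 => ->; exact: commr1.
have [[q [b [qp E']]] | [m1' [m2 [h1 h2 cop E']]]] := PPS m1.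
  apply: (CL pp qp (leqnn (a + b)) Pf Pg); by [rewrite -E | rewrite -E'].
apply: commr_sym.
apply: (@split_comm g f m1' m2 cop (ltnW h1)); first by rewrite -E'.
- apply: commr_sym; apply: (IHm m2 _ (g ^+ m1') (P_pow m1' Pg) (ltnW h2)).
    by rewrite E' (ltn_Pmull h1 (ltnW h2)).
  by rewrite -exprM -E'.
- apply: commr_sym; apply: (IHm m1' _ (g ^+ m2) (P_pow m2 Pg) (ltnW h1)).
    by rewrite E' (ltn_Pmulr h2 (ltnW h1)).
  by rewrite -exprM mulnC -E'.
Qed.

Lemma main_comm (hrho : A rho) (hsigma : A sigma)
  (drho : mu_diag e iota rho) (dsigma : mu_diag e iota sigma) :
  (fun x => rho (sigma x)) = (fun x => sigma (rho x)).
Proof.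
set r := Endo (A_End hrho).
set s := Endo (A_End hsigma).
have Pr : P r by split => //; [exact: drho.1 | exact: gen2_r].
have Ps : P s by split => //; [exact: dsigma.1 | exact: gen2_s].
have [N [N0 HN]] := @torsion_endo r (gen2_r _ _).
have [N' [N0' HN']] := @torsion_endo s (gen2_s _ _).
have := GEN Pr N0 HN Ps N0' HN'.
move=> C; apply: funext => x.
by have := congr1 (fun F : endo => F x) C; rewrite !emulE.
Qed.
End Main.

Unset Implicit Arguments.

Theorem mainTheorem20
  (e : steinitz)
  (k : comNzRingType) (iota : {rmorphism k -> algC})
  (iota_inj : injective iota)
  (iota_img : forall x : algC, in_Zmu e x <-> exists a : k, x = iota a)
  (M : lmodType k) (A : (M -> M) -> Prop)
  (hA : is_subalg A)
  (hgood : forall p, prime p -> st_dvd p e ->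
     p_good p A /\
     forall zp : k, p.-primitive_root (iota zp) ->
       forall f : M -> M,
         (exists g, A g /\ f = (fun x => (1 - zp) *: g x)) <->
         (A f /\ exists h, is_End h /\ f = (fun x => (1 - zp) *: h x)))
  (rho sigma : M -> M) (hrho : A rho) (hsigma : A sigma)
  (drho : mu_diag e iota rho) (dsigma : mu_diag e iota sigma)
  (htors : torsion2 rho sigma) :
  (fun x => rho (sigma x)) = (fun x => sigma (rho x)).
Proof.
exact: (main_comm iota_inj iota_img hA hgood htors hrho hsigma drho dsigma).
Qed.
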